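(* Let $r\in\mathbb R\setminus\{0\}$, let $\varphi_0,\varphi_1,\varphi$ be positive non-degenerate quasi-concave functions on $(0,\infty)$, let $\{\widetilde t_i\}$ be a discretizing sequence for $\varphi(\varphi_0,\varphi_1)$, $\{\tau_k\}$ a discretizing sequence for $\varphi_0$ and $\{z_k\}$ a discretizing sequence for $\varphi_1$. Then there is a constant $C$ independent of $k$ such that for all $k\in\mathbb Z$ $$\sum_{i:\ \tau_k\le\widetilde t_i\le\tau_{k+1}}\varphi\Big(\frac{\varphi_1(\widetilde t_i)}{\varphi_0(\widetilde t_i)}\Big)^r\le C\sup_{i:\ \tau_k\le\widetilde t_i\le\tau_{k+1}}\varphi\Big(\frac{\varphi_1(\widetilde t_i)}{\varphi_0(\widetilde t_i)}\Big)^r,$$ $$\sum_{i:\ z_k\le\widetilde t_i\le z_{k+1}}\Big(\frac{\varphi_0(\widetilde t_i)}{\varphi_1(\widetilde t_i)}\varphi\Big(\frac{\varphi_1(\widetilde t_i)}{\varphi_0(\widetilde t_i)}\Big)\Big)^r\le C\sup_{i:\ z_k\le\widetilde t_i\le z_{k+1}}\Big(\frac{\varphi_0(\widetilde t_i)}{\varphi_1(\widetilde t_i)}\varphi\Big(\frac{\varphi_1(\widetilde t_i)}{\varphi_0(\widetilde t_i)}\Big)\Big)^r.$$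
   Context: A function $\psi:(0,\infty)\to(0,\infty)$ is non-degenerate quasi-concave if it is non-decreasing, $\psi(t)/t$ is non-increasing, and $\lim_{t\to0+}\psi(t)=\lim_{t\to\infty}\psi(t)/t=\lim_{t\to0+}t/\psi(t)=\lim_{t\to\infty}1/\psi(t)=0$. $\varphi(\varphi_0,\varphi_1)(t)=\varphi_0(t)\varphi(\varphi_1(t)/\varphi_0(t))$. A positive sequence is strongly increasing if $\inf_k a_{k+1}/a_k\ge2$, strongly decreasing if $\sup_k a_{k+1}/a_k\le1/2$. A strongly increasing $\{s_k\}_{k\in\mathbb Z}$ is a discretizing sequence for $\psi$ if $\{\psi(s_k)\}$ is strongly increasing, $\{\psi(s_k)/s_k\}$ is strongly decreasing, and $\mathbb Z=\mathbb Z_1\sqcup\mathbb Z_2$ with $\psi(s_{k+1})\le2\psi(s_k)$ for $k\in\mathbb Z_1$ and $\psi(s_k)/s_k\le2\psi(s_{k+1})/s_{k+1}$ for $k\in\mathbb Z_2$. *)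

(* Defs.v *)
From Stdlib Require Import Reals Lra ZArith List.
From Coquelicot Require Import Coquelicot.
Open Scope R_scope.

(* Non-degenerate quasi-concave function on (0,oo); only values at t > 0 matter. *)
Definition ndqc (psi : R -> R) : Prop :=
  (forall t, 0 < t -> 0 < psi t) /\
  (forall s t, 0 < s -> s <= t -> psi s <= psi t) /\
  (forall s t, 0 < s -> s <= t -> psi t / t <= psi s / s) /\
  filterlim psi (at_right 0) (locally 0) /\
  filterlim (fun t => psi t / t) (Rbar_locally p_infty) (locally 0) /\
  filterlim (fun t => t / psi t) (at_right 0) (locally 0) /\
  filterlim (fun t => / psi t) (Rbar_locally p_infty) (locally 0).

(* phi(phi0,phi1)(t) = phi0(t) * phi(phi1(t)/phi0(t)) *)
Definition interp_fun (phi phi0 phi1 : R -> R) (t : R) : R :=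
  phi0 t * phi (phi1 t / phi0 t).

Definition pos_seq (a : Z -> R) : Prop := forall k, 0 < a k.

Definition strongly_increasing (a : Z -> R) : Prop :=
  pos_seq a /\ forall k, 2 <= a (k + 1)%Z / a k.

Definition strongly_decreasing (a : Z -> R) : Prop :=
  pos_seq a /\ forall k, a (k + 1)%Z / a k <= 1 / 2.

Definition discretizing (psi : R -> R) (s : Z -> R) : Prop :=
  strongly_increasing s /\
  strongly_increasing (fun k => psi (s k)) /\
  strongly_decreasing (fun k => psi (s k) / s k) /\
  (* Z = Z1 (disjoint union) Z2, with Z1 = {k | P k}, Z2 = {k | ~ P k} *)
  exists P : Z -> Prop,
    (forall k, P k -> psi (s (k + 1)%Z) <= 2 * psi (s k)) /\
    (forall k, ~ P k -> psi (s k) / s k <= 2 * (psi (s (k + 1)%Z) / s (k + 1)%Z)).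

Fixpoint sumR (l : list R) : R :=
  match l with nil => 0 | x :: l' => x + sumR l' end.

(* "sum_{i in A} f i <= C * sup_{i in A} f i" for nonnegative f:
   every finite partial sum over A is bounded by C * M for every
   nonnegative upper bound M of f on A (sup of the empty set taken as 0). *)
Definition sum_le_C_sup (A : Z -> Prop) (f : Z -> R) (C : R) : Prop :=
  forall l : list Z, NoDup l -> (forall i, In i l -> A i) ->
  forall M, 0 <= M -> (forall i, A i -> f i <= M) ->
  sumR (map f l) <= C * M.

(* Main.v *)
Require Import Defs.
From Stdlib Require Import Reals Lra Lia ZArith List.
From Coquelicot Require Import Coquelicot.
Open Scope R_scope.
Lemma exp_le' x y : x <= y -> exp x <= exp y.
Proof. intros [H|H]. left; now apply exp_increasing. subst; lra. Qed.
Lemma ln_le' x y : 0 < x -> x <= y -> ln x <= ln y.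
Proof. intros Hx [H|H]. left; now apply ln_increasing. subst; lra. Qed.

Lemma sumR_le (f g : Z -> R) l : (forall i, In i l -> f i <= g i) ->
  sumR (map f l) <= sumR (map g l).
Proof.
  induction l; simpl; intros H. lra.
  assert (f a <= g a) by auto. assert (sumR (map f l) <= sumR (map g l)) by auto. lra.
Qed.
Lemma sumR_scal (g : Z -> R) c l : sumR (map (fun i => c * g i) l) = c * sumR (map g l).
Proof. induction l; simpl. ring. rewrite IHl; ring. Qed.
Lemma sumR_nonneg (g : Z -> R) l : (forall i, 0 <= g i) -> 0 <= sumR (map g l).
Proof. induction l; simpl; intros H. lra. specialize (H a) as H1. specialize (IHl H). lra. Qed.

Lemma NoDup_remove' (l : list Z) a : NoDup l -> NoDup (remove Z.eq_dec a l).
Proof.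
  induction l; simpl; intros H. constructor.
  inversion H; subst. destruct (Z.eq_dec a a0). auto.
  constructor. intro HH. apply in_remove in HH. tauto. auto.
Qed.

Lemma sumR_remove (x : Z -> R) (l : list Z) a : NoDup l ->
  sumR (map x l) = (if in_dec Z.eq_dec a l then x a else 0) + sumR (map x (remove Z.eq_dec a l)).
Proof.
  induction l; simpl; intros H. lra.
  inversion H; subst.
  destruct (Z.eq_dec a a0) as [e|e].
  - subst. destruct (Z.eq_dec a0 a0); [|congruence].
    assert (remove Z.eq_dec a0 l = l) as ->. { apply notin_remove; auto. }
    lra.
  - destruct (Z.eq_dec a0 a) as [e'|e']; [congruence|].
    simpl. rewrite IHl by auto.
    destruct (in_dec Z.eq_dec a l); destruct (in_dec Z.eq_dec a (a0 :: l)); simpl in *; try tauto; try lra.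

Qed.

Lemma geo_inc_n (x : Z -> R) c : 1 < c -> (forall i, 0 < x i) ->
  (forall i, c * x i <= x (i + 1)%Z) ->
  forall n N l, NoDup l -> (forall i, In i l -> (N - Z.of_nat n < i <= N)%Z) ->
  sumR (map x l) <= x N * (c / (c - 1)).
Proof.
  intros Hc Hp Hg. induction n; intros N l Hnd Hin.
  - destruct l as [|a l]. simpl. assert (0 < x N) by auto.
    assert (0 < c / (c-1)) by (apply Rdiv_lt_0_compat; lra). nra.
    exfalso. specialize (Hin a (or_introl eq_refl)). lia.
  - rewrite (sumR_remove x l N Hnd).
    assert (H1 : sumR (map x (remove Z.eq_dec N l)) <= x (N - 1)%Z * (c / (c - 1))).
    { apply IHn. apply NoDup_remove'; auto.
      intros i Hi. apply in_remove in Hi. destruct Hi as [Hi Hne].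
      specialize (Hin i Hi). lia. }
    assert (H2 : c * x (N-1)%Z <= x N).
    { specialize (Hg (N-1)%Z). replace (N - 1 + 1)%Z with N in Hg by lia. auto. }
    assert (H3 : x (N-1)%Z * (c / (c-1)) <= x N / (c - 1)).
    { replace (x (N-1)%Z * (c / (c-1))) with (c * x (N-1)%Z / (c-1)) by (field; lra).
      unfold Rdiv. apply Rmult_le_compat_r; auto. left; apply Rinv_0_lt_compat; lra. }
    assert (H4 : x N + x N / (c-1) = x N * (c / (c-1))) by (field; lra).
    assert (0 < x N) by auto.
    assert (0 <= x N / (c-1)) by (left; apply Rdiv_lt_0_compat; lra).
    destruct (in_dec Z.eq_dec N l); lra.
Qed.

Lemma lower_bound (l : list Z) : exists L, forall i, In i l -> (L < i)%Z.
Proof.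
  induction l as [|a l [L HL]]. exists 0%Z; simpl; tauto.
  exists (Z.min L (a - 1)). intros i [->|Hi]. lia. specialize (HL i Hi). lia.
Qed.

Lemma geo_inc (x : Z -> R) c : 1 < c -> (forall i, 0 < x i) ->
  (forall i, c * x i <= x (i + 1)%Z) ->
  forall N l, NoDup l -> (forall i, In i l -> (i <= N)%Z) ->
  sumR (map x l) <= x N * (c / (c - 1)).
Proof.
  intros Hc Hp Hg N l Hnd Hin. destruct (lower_bound l) as [L HL].
  apply (geo_inc_n x c Hc Hp Hg (Z.to_nat (N - L))); auto.
  intros i Hi. specialize (HL i Hi). specialize (Hin i Hi). lia.
Qed.

Lemma sumR_map_opp (x : Z -> R) l : sumR (map (fun i => x (- i)%Z) (map Z.opp l)) = sumR (map x l).
Proof. induction l; simpl. auto. rewrite Z.opp_involutive, IHl. auto. Qed.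

Lemma NoDup_map_opp l : NoDup l -> NoDup (map Z.opp l).
Proof.
  induction l; simpl; intros H; constructor; inversion H; subst; auto.
  intro HH. apply in_map_iff in HH. destruct HH as [y [Hy Hy']].
  assert (y = a) by lia. subst; auto.
Qed.

Lemma geo_dec (x : Z -> R) c : 1 < c -> (forall i, 0 < x i) ->
  (forall i, c * x (i + 1)%Z <= x i) ->
  forall N l, NoDup l -> (forall i, In i l -> (N <= i)%Z) ->
  sumR (map x l) <= x N * (c / (c - 1)).
Proof.
  intros Hc Hp Hg N l Hnd Hin.
  rewrite <- sumR_map_opp.
  replace (x N) with ((fun i => x (- i)%Z) (- N)%Z) by (simpl; rewrite Z.opp_involutive; auto).
  apply (geo_inc (fun i => x (- i)%Z) c); auto.
  - intros i. cbv beta. specialize (Hg (- i - 1)%Z). replace (- i - 1 + 1)%Z with (- i)%Z in Hg by lia.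
    replace (- (i + 1))%Z with (- i - 1)%Z by lia. auto.
  - apply NoDup_map_opp; auto.
  - intros i Hi. apply in_map_iff in Hi. destruct Hi as [y [<- Hy]]. specialize (Hin y Hy). lia.
Qed.

Lemma max_in (l : list Z) : l <> nil -> exists N, In N l /\ forall i, In i l -> (i <= N)%Z.
Proof.
  induction l as [|a l IH]; intros H. congruence.
  destruct l as [|b l']. exists a; simpl; split; auto. intros i [->|[]]; lia.
  destruct IH as [N [HN HN']]. congruence.
  destruct (Z.le_gt_cases a N).
  exists N; split; [right; auto|]. intros i [->|Hi]; auto.
  exists a; split; [left; auto|]. intros i [->|Hi]. lia. specialize (HN' i Hi); lia.
Qed.
Lemma min_in (l : list Z) : l <> nil -> exists N, In N l /\ forall i, In i l -> (N <= i)%Z.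
Proof.
  induction l as [|a l IH]; intros H. congruence.
  destruct l as [|b l']. exists a; simpl; split; auto. intros i [->|[]]; lia.
  destruct IH as [N [HN HN']]. congruence.
  destruct (Z.le_gt_cases N a).
  exists N; split; [right; auto|]. intros i [->|Hi]; auto.
  exists a; split; [left; auto|]. intros i [->|Hi]. lia. specialize (HN' i Hi); lia.
Qed.

Lemma geo_sum (x f : Z -> R) (A : Z -> Prop) c :
  1 < c -> (forall i, 0 < x i) ->
  ((forall i, c * x i <= x (i + 1)%Z) \/ (forall i, c * x (i + 1)%Z <= x i)) ->
  (forall i, A i -> f i <= c * x i /\ x i <= c * f i) ->
  sum_le_C_sup A f (c * c * (c / (c - 1))).
Proof.
  intros Hc Hp Hg Hfx l Hnd HA M HM HfM.
  assert (HD : 0 < c / (c - 1)) by (apply Rdiv_lt_0_compat; lra).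
  destruct l as [|a l'].
  { simpl. assert (0 < c * c * (c / (c-1))). { apply Rmult_lt_0_compat; nra. } nra. }
  assert (Hs : sumR (map f (a :: l')) <= c * sumR (map x (a :: l'))).
  { rewrite <- sumR_scal. apply sumR_le. intros i Hi. apply Hfx; auto. }
  assert (Hb : exists N, A N /\ sumR (map x (a :: l')) <= x N * (c / (c - 1))).
  { destruct Hg as [Hg|Hg].
    - destruct (max_in (a :: l')) as [N [HN HN']]. congruence.
      exists N; split; auto. apply geo_inc; auto.
    - destruct (min_in (a :: l')) as [N [HN HN']]. congruence.
      exists N; split; auto. apply geo_dec; auto. }
  destruct Hb as [N [HAN Hb]].
  destruct (Hfx N HAN) as [_ H2]. specialize (HfM N HAN).
  assert (x N <= c * M) by nra.
  assert (x N * (c / (c-1)) <= c * M * (c / (c-1))) by nra.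
  nra.
Qed.

Lemma ln2_pos : 0 < ln 2.
Proof. rewrite <- ln_1. apply ln_increasing; lra. Qed.

Lemma rp_close r u v : 0 < u -> 0 < v -> v / 2 <= u -> u <= v ->
  Rpower u r <= Rpower 2 (Rabs r) * Rpower v r /\ Rpower v r <= Rpower 2 (Rabs r) * Rpower u r.
Proof.
  intros Hu Hv H1 H2. unfold Rpower. rewrite <- !exp_plus.
  assert (L1 : ln u <= ln v) by (apply ln_le'; auto).
  assert (L2 : ln v <= ln 2 + ln u) by (rewrite <- ln_mult by lra; apply ln_le'; lra).
  assert (L3 := ln2_pos).
  split; apply exp_le'; destruct (Rle_dec 0 r).
  - rewrite Rabs_right by lra. nra.
  - rewrite Rabs_left by lra. nra.
  - rewrite Rabs_right by lra. nra.
  - rewrite Rabs_left by lra. nra.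
Qed.

Lemma rp_geo r u v : 0 < u -> 2 * u <= v ->
  (0 < r -> Rpower 2 (Rabs r) * Rpower u r <= Rpower v r) /\
  (r < 0 -> Rpower 2 (Rabs r) * Rpower v r <= Rpower u r).
Proof.
  intros Hu H. unfold Rpower. rewrite <- !exp_plus.
  assert (L2 : ln 2 + ln u <= ln v) by (rewrite <- ln_mult by lra; apply ln_le'; lra).
  split; intros Hr; apply exp_le'.
  - rewrite Rabs_right by lra. nra.
  - rewrite Rabs_left by lra. nra.
Qed.

Definition Cst (r : R) : R :=
  Rpower 2 (Rabs r) * Rpower 2 (Rabs r) * (Rpower 2 (Rabs r) / (Rpower 2 (Rabs r) - 1)).

Lemma c_gt1 r : r <> 0 -> 1 < Rpower 2 (Rabs r).
Proof.
  intros Hr. unfold Rpower. rewrite <- exp_0. apply exp_increasing.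
  assert (0 < Rabs r) by (apply Rabs_pos_lt; auto). assert (L := ln2_pos). nra.
Qed.

Lemma mid r (a p f : Z -> R) B (A : Z -> Prop) :
  r <> 0 -> 0 < B -> (forall i, 0 < a i) ->
  ((forall i, 2 * a i <= a (i + 1)%Z) \/ (forall i, 2 * a (i + 1)%Z <= a i)) ->
  (forall i, A i -> 0 < p i /\ B <= p i <= 2 * B) ->
  (forall i, A i -> f i = Rpower (a i / p i) r) ->
  sum_le_C_sup A f (Cst r).
Proof.
  intros Hr HB Ha Hg Hp Hf. unfold Cst.
  apply (geo_sum (fun i => Rpower (a i / B) r)).
  - apply c_gt1; auto.
  - intros i. apply exp_pos.
  - assert (Hu : forall i, 0 < a i / B) by (intros; apply Rdiv_lt_0_compat; auto).
    destruct (Rlt_or_le 0 r) as [Hr'|Hr'].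
    + destruct Hg as [Hg|Hg]; [left|right]; intros i.
      * apply (rp_geo r (a i / B) (a (i+1)%Z / B) (Hu i)). unfold Rdiv.
        specialize (Hg i). assert (0 < / B) by (apply Rinv_0_lt_compat; auto). nra. auto.
      * apply (rp_geo r (a (i+1)%Z / B) (a i / B) (Hu _)). unfold Rdiv.
        specialize (Hg i). assert (0 < / B) by (apply Rinv_0_lt_compat; auto). nra. auto.
    + assert (r < 0) by lra.
      destruct Hg as [Hg|Hg]; [right|left]; intros i.
      * apply (rp_geo r (a i / B) (a (i+1)%Z / B) (Hu i)). unfold Rdiv.
        specialize (Hg i). assert (0 < / B) by (apply Rinv_0_lt_compat; auto). nra. auto.
      * apply (rp_geo r (a (i+1)%Z / B) (a i / B) (Hu _)). unfold Rdiv.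
        specialize (Hg i). assert (0 < / B) by (apply Rinv_0_lt_compat; auto). nra. auto.
  - intros i HA. rewrite (Hf i HA). destruct (Hp i HA) as [Hpi [Hp1 Hp2]].
    assert (Hai := Ha i).
    apply rp_close.
    + apply Rdiv_lt_0_compat; auto.
    + apply Rdiv_lt_0_compat; auto.
    + replace (a i / B / 2) with (a i * / (2 * B)) by (field; lra).
      unfold Rdiv. apply Rmult_le_compat_l; [lra|]. apply Rinv_le_contravar; lra.
    + unfold Rdiv. apply Rmult_le_compat_l; [lra|]. apply Rinv_le_contravar; lra.
Qed.

Lemma part r (phia psi : R -> R) (tt s : Z -> R) (k : Z) (f : Z -> R) :
  r <> 0 -> ndqc phia -> discretizing phia s -> pos_seq tt ->
  strongly_increasing (fun i => psi (tt i)) ->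
  strongly_decreasing (fun i => psi (tt i) / tt i) ->
  (forall i, f i = Rpower (psi (tt i) / phia (tt i)) r) ->
  sum_le_C_sup (fun i => s k <= tt i <= s (k + 1)%Z) f (Cst r).
Proof.
  intros Hr [Hpp [Hmon [Hq _]]] [[Hs Hs2] [[Hps Hps2] [_ [P [HP1 HP2]]]]] Htt [Ha Ha2] [Hb Hb2] Hf.
  assert (Hsk := Hs k). assert (Hsk1 := Hs (k+1)%Z).
  destruct (Classical_Prop.classic (P k)) as [HPk|HPk].
  - specialize (HP1 k HPk).
    apply (mid r (fun i => psi (tt i)) (fun i => phia (tt i)) f (phia (s k))).
    + auto.
    + apply Hpp; auto.
    + intros i; apply Ha.
    + left. intros i. specialize (Ha2 i). specialize (Ha i).
      apply (Rmult_le_compat_r (psi (tt i))) in Ha2; [|lra].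
      unfold Rdiv in Ha2. rewrite Rmult_assoc, Rinv_l, Rmult_1_r in Ha2 by lra. lra.
    + intros i [H1 H2]. assert (Hti := Htt i). split. apply Hpp; auto.
      split. apply Hmon; auto.
      assert (phia (tt i) <= phia (s (k+1)%Z)) by (apply Hmon; auto; lra). lra.
    + intros i _. apply Hf.
  - specialize (HP2 k HPk).
    apply (mid r (fun i => psi (tt i) / tt i) (fun i => phia (tt i) / tt i) f
               (phia (s (k+1)%Z) / s (k+1)%Z)).
    + auto.
    + apply Rdiv_lt_0_compat; auto.
    + intros i; apply Hb.
    + right. intros i. specialize (Hb2 i). specialize (Hb i).
      apply (Rmult_le_compat_r (psi (tt i) / tt i)) in Hb2; [|lra].
      unfold Rdiv in Hb2 |- *. rewrite Rmult_assoc, Rinv_l, Rmult_1_r in Hb2 by (unfold Rdiv in Hb; lra).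
      unfold Rdiv in Hb. lra.
    + intros i [H1 H2]. assert (Hti := Htt i). split.
      apply Rdiv_lt_0_compat; auto.
      split. apply Hq; auto.
      assert (phia (tt i) / tt i <= phia (s k) / s k) by (apply Hq; auto). lra.
    + intros i _. rewrite Hf. f_equal. assert (Hti := Htt i). assert (0 < phia (tt i)) by auto.
      field. split; lra.
Qed.

Theorem lemma3p8 (r : R) (phi0 phi1 phi : R -> R) (tt tau z : Z -> R) :
  r <> 0 ->
  ndqc phi0 -> ndqc phi1 -> ndqc phi ->
  discretizing (interp_fun phi phi0 phi1) tt ->
  discretizing phi0 tau ->
  discretizing phi1 z ->
  exists C : R, forall k : Z,
    sum_le_C_sup (fun i => tau k <= tt i <= tau (k + 1)%Z)
      (fun i => Rpower (phi (phi1 (tt i) / phi0 (tt i))) r) C /\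
    sum_le_C_sup (fun i => z k <= tt i <= z (k + 1)%Z)
      (fun i => Rpower (phi0 (tt i) / phi1 (tt i) * phi (phi1 (tt i) / phi0 (tt i))) r) C.
Proof.
  intros Hr H0 H1 H Ht Htau Hz.
  exists (Cst r). intros k.
  destruct Ht as [[Htp Ht2] [Hi [Hd _]]].
  assert (P0 := proj1 H0). assert (P1 := proj1 H1).
  split.
  - apply (part r phi0 (interp_fun phi phi0 phi1) tt tau k); auto.
    intros i. assert (0 < tt i) by apply Htp. assert (0 < phi0 (tt i)) by auto.
    unfold interp_fun. f_equal. field. lra.
  - apply (part r phi1 (interp_fun phi phi0 phi1) tt z k); auto.
    intros i. assert (0 < tt i) by apply Htp. assert (0 < phi0 (tt i)) by auto.
    assert (0 < phi1 (tt i)) by auto.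
    unfold interp_fun. f_equal. field. lra.
Qed.
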